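(* Consider $n$ agents with private types $t_i\in[0,\infty)$ whose valuations are $v_i(t_i,S)=t_i\cdot|S|$ for every winning set $S\subseteq[n]$ (including sets with $i\notin S$). Then for every fixed $k\ge1$ there is no universally truthful mechanism that is competitive with respect to $\mathcal{F}^{(k)}$: for every constant $L\ge1$ there exists $n\ge k$ such that no universally truthful mechanism on $n$ such agents has expected revenue at least $\mathcal{F}^{(k)}(t)/L$ for all $t\in[0,\infty)^n$, where $\mathcal{F}^{(k)}(t)=\max\{c|S| : c\ge0,\ S\subseteq[n],\ |S|\ge k,\ v_i(t_i,S)\ge c\ \forall i\in S\}$.
   Context: A deterministic mechanism maps reported types to a winning set $S$ and prices $p_i$ charged only to $i\in S$; agent $i$'s utility is $v_i(t_i,S)-p_i$ if $i\in S$ and $v_i(t_i,S)$ if $i\notin S$; revenue is $\sum_{i\in S}p_i$. It is truthful if reporting the true type maximizes every agent's utility for all fixed reports of the others, and individually rational if each winner's payment does not exceed its value $v_i(t_i,S)$ under truthful reporting. A universally truthful mechanism is a probability distribution over deterministic truthful, individually rational mechanisms. *)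

(* Defs.v *)
From HB Require Import structures.
From mathcomp Require Import all_boot all_order all_algebra.
From mathcomp Require Import all_classical all_reals all_analysis.
Set Implicit Arguments. Unset Strict Implicit. Unset Printing Implicit Defensive.
Import Order.TTheory GRing.Theory Num.Theory.
Local Open Scope ring_scope.
Local Open Scope classical_set_scope.

Section Auction.
Variable R : realType.
Variable n : nat.

Definition profile := 'I_n -> R.

Definition nonneg_profile (t : profile) := forall i, 0 <= t i.

Definition val (ti : R) (S : {set 'I_n}) : R := ti * #|S|%:R.

(* deterministic mechanism: winning set and prices (prices charged only to winners) *)
Record mech := Mech {
  win : profile -> {set 'I_n};
  price : profile -> 'I_n -> R }.

Definition util (M : mech) (i : 'I_n) (ti : R) (b : profile) : R :=
  if i \in win M b then val ti (win M b) - price M b i else val ti (win M b).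

Definition update (b : profile) (i : 'I_n) (x : R) : profile :=
  fun j => if j == i then x else b j.

(* truthful: for every agent i, true type ti = b i, reports of others b,
   and every misreport x, truth-telling is at least as good *)
Definition truthful (M : mech) : Prop :=
  forall (b : profile), nonneg_profile b -> forall (i : 'I_n) (x : R), 0 <= x ->
    util M i (b i) (update b i x) <= util M i (b i) b.

Definition indiv_rational (M : mech) : Prop :=
  forall (t : profile), nonneg_profile t ->
    forall i, i \in win M t -> price M t i <= val (t i) (win M t).

Definition revenue (M : mech) (t : profile) : R :=
  \sum_(i in win M t) price M t i.

(* universally truthful mechanism: a probability distribution (probability
   space Omega with law P) over deterministic truthful IR mechanisms, with
   measurable revenue so that expected revenue is defined *)
Definition universally_truthful {d : measure_display} {Omega : measurableType d}
  (P : probability Omega R) (M : Omega -> mech) : Prop :=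
  (forall w, truthful (M w) /\ indiv_rational (M w)) /\
  (forall t : profile, measurable_fun setT (fun w => revenue (M w) t)).

Definition expected_revenue {d : measure_display} {Omega : measurableType d}
  (P : probability Omega R) (M : Omega -> mech) (t : profile) : \bar R :=
  (\int[P]_w (revenue (M w) t)%:E)%E.

Definition Fk (k : nat) (t : profile) : R :=
  sup [set x : R | exists (c : R) (S : {set 'I_n}),
        [/\ 0 <= c, (k <= #|S|)%N, (forall i, i \in S -> c <= val (t i) S)
          & x = c * #|S|%:R]].

End Auction.

(* Main.v *)
Require Import Defs.
From HB Require Import structures.
From mathcomp Require Import all_boot all_order all_algebra.
From mathcomp Require Import all_classical all_reals all_analysis.
From mathcomp Require Import ring lra.
From mathcomp Require Import measurable_realfun.
Import Order.TTheory GRing.Theory Num.Theory.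
Local Open Scope ring_scope.

Section Det.
Variable R : realType.
Variable n : nat.
Variable M : mech R n.
Hypothesis HT : truthful M.
Hypothesis HI : indiv_rational M.

Definition aa (b : profile R n) : R := (#|win M b|)%:R.
Definition qq (i : 'I_n) (b : profile R n) : R :=
  if i \in win M b then price M b i else 0.

Lemma util_eq i ti b : util M i ti b = ti * aa b - qq i b.
Proof. by rewrite /util /Defs.val /aa /qq; case: ifP => _; rewrite ?subr0. Qed.

Lemma rev_eq t : revenue M t = \sum_i qq i t.
Proof. by rewrite /revenue big_mkcond. Qed.

Lemma update_nonneg (b : profile R n) i x : nonneg_profile b -> 0 <= x -> nonneg_profile (update b i x).
Proof. rewrite /nonneg_profile => hb hx j; rewrite /update; case: (j == i) => //. Qed.

Lemma update_upd (b : profile R n) i x y : update (update b i y) i x = update b i x.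
Proof. by apply: boolp.funext => j; rewrite /update; case: eqP. Qed.

Lemma update_at (b : profile R n) i y : update b i y i = y.
Proof. by rewrite /update eqxx. Qed.

Lemma trut (b : profile R n) i x y : nonneg_profile b -> 0 <= x -> 0 <= y ->
  qq i (update b i y) - qq i (update b i x) <=
  y * (aa (update b i y) - aa (update b i x)).
Proof.
move=> hb hx hy.
have := @HT (update b i y) (@update_nonneg b i y hb hy) i x hx.
rewrite update_upd update_at !util_eq => h. lra.
Qed.

Lemma mono_own (b : profile R n) i x y : nonneg_profile b -> 0 <= x -> x <= y ->
  aa (update b i x) <= aa (update b i y).
Proof.
move=> hb hx hxy.
have hy : 0 <= y by apply: le_trans hxy.
have h1 := @trut b i x y hb hx hy. have h2 := @trut b i y x hb hy hx.
have : 0 <= (y - x) * (aa (update b i y) - aa (update b i x)) by nra.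
rewrite le_eqVlt in hxy; case/orP: hxy => [/eqP -> _|hxy]; first by [].
rewrite pmulr_rge0 ?subr_gt0 // subr_ge0 //.
Qed.

Definition mix (b b' : profile R n) (l : nat) : profile R n :=
  fun i => if (i < l)%N then b' i else b i.

Lemma mono (b b' : profile R n) : nonneg_profile b -> nonneg_profile b' ->
  (forall i, b i <= b' i) -> aa b <= aa b'.
Proof.
move=> hb hb' hbb.
have hmix : forall l, nonneg_profile (mix b b' l).
  by move=> l i; rewrite /mix; case: ifP.
have key : forall l, aa b <= aa (mix b b' l).
  elim=> [|l IH].
    have -> : mix b b' 0 = b by apply: funext => i.
    by [].
  apply: le_trans IH _.
  case: (ltnP l n) => hl.
  - pose o := Ordinal hl.
    have e1 : mix b b' l = update (mix b b' l) o (b o).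
      apply: boolp.funext => j; rewrite /update /mix; case: eqP => [->|//].
      by rewrite /= ltnn.
    have e2 : mix b b' l.+1 = update (mix b b' l) o (b' o).
      apply: boolp.funext => j; rewrite /update /mix ltnS leq_eqVlt.
      case: (j =P o) => [->|hj]; first by rewrite /= eqxx.
      have -> : (nat_of_ord j == l) = false.
        by apply/negbTE; apply/eqP => e; apply: hj; apply: val_inj.
      by [].
    rewrite e2 {1}e1; apply: mono_own => //.
  - have -> : mix b b' l.+1 = mix b b' l.
      apply: boolp.funext => j; rewrite /mix.
      have h1 : (j < l)%N by apply: leq_trans (ltn_ord j) hl.
      by rewrite h1 (ltn_trans h1 (ltnSn l)).
    by [].
have -> : b' = mix b b' n by apply: boolp.funext => j; rewrite /mix ltn_ord.
exact: key.
Qed.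

Lemma ir0 (b : profile R n) i : nonneg_profile b -> qq i (update b i 0) <= 0.
Proof.
move=> hb; rewrite /qq; case: ifP => // hw.
have := @HI (update b i 0) (@update_nonneg b i 0 hb (lexx 0)) i hw.
by rewrite update_at /Defs.val mul0r.
Qed.

Lemma aa_ge0 b : 0 <= aa b.
Proof. by rewrite /aa. Qed.

Lemma aa_le b : aa b <= n%:R.
Proof. by rewrite /aa ler_nat -[X in (_ <= X)%N]card_ord max_card. Qed.


Fixpoint avg (h : nat -> R) (l : nat) : R :=
  if l is l'.+1 then (avg h l' + h l') / 2 else 0.

Lemma slice (b : profile R n) i : nonneg_profile b -> forall l,
  qq i (update b i (2 ^+ l)) <=
  2 ^+ l * (aa (update b i (2 ^+ l)) - avg (fun m => aa (update b i (2 ^+ m))) l).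
Proof.
move=> hb; elim=> [|l IH].
  rewrite expr0 mul1r /= subr0.
  have := @trut b i 0 1 hb (lexx 0) ler01.
  have := @ir0 b i hb. have := aa_ge0 (update b i 0). lra.
have h2 : 0 <= (2 : R) ^+ l by apply: exprn_ge0.
have := @trut b i (2 ^+ l) (2 ^+ l.+1) hb h2 (exprn_ge0 _ (ler0n _ 2)).
rewrite exprS /=.
set X := (2 : R) ^+ l. set hl := aa (update b i X).
set hl' := aa (update b i (2 * X)). set e := avg _ l.
move: IH; rewrite -/X -/hl -/e => IH h.
lra.
Qed.

Lemma avg_mono (g h : nat -> R) l : (forall m, (m < l)%N -> g m <= h m) ->
  avg g l <= avg h l.
Proof.
elim: l => [|l IH] hgh //=.
have := IH (fun m hm => hgh m (ltn_trans hm (ltnSn l))).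
have := hgh l (ltnSn l). lra.
Qed.

Lemma avg_le_self (g : nat -> R) l : (forall m, 0 <= g m) ->
  (forall m, g m <= g m.+1) -> avg g l <= g l.
Proof.
move=> g0 gm; elim: l => [|l IH] /=; first exact: g0.
have := gm l. lra.
Qed.

Lemma avg_le_n (g : nat -> R) l : (forall m, g m <= n%:R) -> avg g l <= n%:R.
Proof.
move=> gn; elim: l => [|l IH] /=; first exact: ler0n.
have := gn l. lra.
Qed.

Definition cstp (s : R) : profile R n := fun _ => s.

Lemma cstp_nonneg s : 0 <= s -> nonneg_profile (cstp s).
Proof. by move=> hs j. Qed.

Definition GG (j : nat) : R := aa (cstp (2 ^+ j)).

Lemma GG_mono j : GG j <= GG j.+1.
Proof.
apply: mono; [exact: cstp_nonneg _ (exprn_ge0 _ (ler0n _ 2))|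
  exact: cstp_nonneg _ (exprn_ge0 _ (ler0n _ 2))|].
move=> i; rewrite /cstp; apply: ler_weXn2l => //; exact: ler1n.
Qed.

Lemma qq_diag i j : qq i (cstp (2 ^+ j)) <= 2 ^+ j * (GG j - avg GG j).
Proof.
have hb := cstp_nonneg _ (exprn_ge0 j (ler0n R 2)).
have := @slice _ i hb j.
have e : update (cstp (2 ^+ j)) i (2 ^+ j) = cstp (2 ^+ j).
  by apply: boolp.funext => k; rewrite /update /cstp; case: eqP.
rewrite e => h; apply: le_trans h _.
apply: ler_wpM2l; first exact: exprn_ge0.
rewrite lerD2l lerN2; apply: avg_mono => m hm.
apply: mono; [exact: cstp_nonneg _ (exprn_ge0 _ (ler0n _ 2))|
  exact: (@update_nonneg _ i _ hb (exprn_ge0 _ (ler0n _ 2)))|].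
move=> k; rewrite /cstp /update; case: eqP => _ //.
apply: ler_weXn2l; [exact: ler1n| exact: ltnW].
Qed.

Lemma rev_diag j : Num.max (revenue M (cstp (2 ^+ j))) 0 / 2 ^+ j <=
  2 * n%:R * (avg GG j.+1 - avg GG j).
Proof.
have hp : 0 < (2 : R) ^+ j by apply: exprn_gt0.
have hge : 0 <= GG j - avg GG j.
  rewrite subr_ge0; apply: avg_le_self; [move=> m; exact: aa_ge0|exact: GG_mono].
have hr : revenue M (cstp (2 ^+ j)) <= n%:R * (2 ^+ j * (GG j - avg GG j)).
  rewrite rev_eq; apply: le_trans (ler_sum _ (fun i _ => qq_diag i j)) _.
  by rewrite sumr_const card_ord mulr_natl.
rewrite ler_pdivrMr // /=.
have -> : 2 * n%:R * ((avg GG j + GG j) / 2 - avg GG j) * 2 ^+ j =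
  n%:R * (2 ^+ j * (GG j - avg GG j)) by field.
rewrite ge_max hr /=; apply: mulr_ge0 => //; exact: mulr_ge0 (ltW hp) hge.
Qed.

Lemma sum_diag N : \sum_(j < N) Num.max (revenue M (cstp (2 ^+ j))) 0 / 2 ^+ j
  <= 2 * n%:R * n%:R.
Proof.
have : \sum_(j < N) Num.max (revenue M (cstp (2 ^+ j))) 0 / 2 ^+ j
  <= 2 * n%:R * avg GG N.
  elim: N => [|N IH]; first by rewrite big_ord0 /= mulr0.
  rewrite big_ord_recr /=.
  have := rev_diag N. simpl avg. lra.
move=> h; apply: le_trans h _; apply: ler_wpM2l; first by [].
by apply: avg_le_n => m; exact: aa_le.
Qed.

End Det.

Lemma Fk_lb (R : realType) (k : nat) (s : R) : (1 <= k)%N -> 0 <= s ->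
  k%:R * k%:R * s <= Fk k (@cstp R k s).
Proof.
move=> hk hs; apply: sup_upper_bound; last first.
  exists (s * k%:R), [set: 'I_k]; split.
  - by apply: mulr_ge0.
  - by rewrite cardsT card_ord.
  - by move=> i _; rewrite /Defs.val /cstp cardsT card_ord.
  - by rewrite cardsT card_ord; ring.
split.
  exists (k%:R * k%:R * s), (s * k%:R), [set: 'I_k]; split.
  - by apply: mulr_ge0.
  - by rewrite cardsT card_ord.
  - by move=> i _; rewrite /Defs.val /cstp cardsT card_ord.
  - by rewrite cardsT card_ord; ring.
exists (s * k%:R * k%:R) => x [c [S [c0 hS hc ->]]].
have hS0 : (0 < #|S|)%N by apply: leq_trans hS.
have [i hi] : exists i, i \in S.
  by move: hS0; rewrite card_gt0 => /set0Pn.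
have hle : (#|S|%:R : R) <= k%:R.
  by rewrite ler_nat -[X in (_ <= X)%N](card_ord k) max_card.
have := hc i hi; rewrite /Defs.val /cstp => hci.
have h1 : c <= s * k%:R.
  apply: le_trans hci _; apply: ler_wpM2l => //.
apply: ler_pM => //.
Qed.

Theorem claim3 (R : realType) (k : nat) : (1 <= k)%N ->
  forall L : R, 1 <= L ->
  exists n : nat, (k <= n)%N /\
    forall (d : measure_display) (Omega : measurableType d)
           (P : probability Omega R) (M : Omega -> mech R n),
      universally_truthful P M ->
      ~ (forall t : profile R n, nonneg_profile t ->
           ((Fk k t / L)%:E <= expected_revenue P M t)%E).
Proof.
move=> hk L hL; exists k; split => //.
move=> d Omega P M [hTI hmeas] H.
set N := (Num.trunc (2 * L)).+1.
have hN : 2 * L < N%:R by apply: truncnS_gt.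
have hL0 : 0 < L by apply: lt_le_trans hL; exact: ltr01.
pose rv (j : nat) (w : Omega) := revenue (M w) (@cstp R k (2 ^+ j)).
pose g (j : nat) (w : Omega) : \bar R := (Num.max (rv j w) 0 / 2 ^+ j)%:E.
have mg : forall j, measurable_fun [set: Omega]%classic (g j).
  move=> j; apply/measurable_EFinP.
  apply: measurable_funM; last exact: measurable_cst.
  apply: measurable_maxr; [exact: hmeas|exact: measurable_cst].
have g0 : forall j w, [set: Omega]%classic w -> (0 <= g j w)%E.
  move=> j w _; rewrite lee_fin; apply: divr_ge0; first by rewrite le_max lexx orbT.
  exact: exprn_ge0.
have step : forall j, ((k%:R * k%:R / L)%:E <= \int[P]_w (g j w))%E.
  move=> j.
  have hp : 0 < (2 : R) ^+ j by apply: exprn_gt0.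
  have hnn := @cstp_nonneg R k _ (ltW hp).
  have h1 := H _ hnn.
  have h2 : ((k%:R * k%:R * 2 ^+ j / L)%:E <= (Fk k (@cstp R k (2 ^+ j)) / L)%:E)%E.
    rewrite lee_fin ler_pM2r ?invr_gt0 //; exact: Fk_lb (ltW hp).
  have h3 : (expected_revenue P M (@cstp R k (2 ^+ j)) <=
      \int[P]_w (Num.max (rv j w) 0)%:E)%E.
    rewrite /expected_revenue integralE.
    have -> : (fun w => ((fun w0 => (revenue (M w0) (@cstp R k (2 ^+ j)))%:E)^\+ w))%E
        = (fun w => (Num.max (rv j w) 0)%:E).
      by apply: boolp.funext => w; rewrite funeposE EFin_max.
    apply: geeDl; rewrite oppe_le0; apply: integral_ge0 => w _.
    exact: funeneg_ge0.
  have h4 : (\int[P]_w (g j w) =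
       ((2 ^+ j)^-1)%:E * \int[P]_w (Num.max (rv j w) 0)%:E)%E.
    rewrite -ge0_integralZl_EFin //.
    - by apply: eq_integral => w _; rewrite /g -EFinM mulrC.
    all: try (by move=> w _; rewrite lee_fin le_max lexx orbT).
    all: try (by rewrite invr_ge0; exact: ltW).
    apply/measurable_EFinP.
    apply: measurable_maxr; [exact: hmeas|exact: measurable_cst].
  rewrite h4.
  have -> : k%:R * k%:R / L = (2 ^+ j)^-1 * (k%:R * k%:R * 2 ^+ j / L).
    by field; apply/andP; split; [exact: lt0r_neq0|exact: lt0r_neq0].
  rewrite EFinM; apply: lee_wpmul2l.
    by rewrite lee_fin invr_ge0; exact: ltW.
  exact: le_trans h2 (le_trans h1 h3).
have hsum : (\sum_(j < N) ((k%:R * k%:R / L)%:E) <=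
    \sum_(j < N) \int[P]_w (g j w))%E.
  by apply: lee_sum => j _; exact: step j.
have e := @ge0_integral_sum _ _ _ P [set: Omega]%classic measurableT 'I_N
  (fun j w => g (nat_of_ord j) w) (fun j => mg j) (fun j => g0 j) (index_enum 'I_N).
rewrite -e in hsum.
have hb : (\int[P]_w (\sum_(j < N) g j w) <= (2 * k%:R * k%:R)%:E)%E.
  rewrite -[X in (_ <= X)%E]mule1 -(probability_setT P) -integral_cst //.
  apply: ge0_le_integral => //.
  - by move=> w _; apply: sume_ge0 => j _; exact: g0.
  - by apply: emeasurable_sum => j; exact: mg.
  - move=> w _; rewrite /g /rv sumEFin lee_fin.
    have [hT hI] := hTI w.
    exact: (@sum_diag R k (M w) hT hI N).
have := le_trans hsum hb.
rewrite sumEFin lee_fin sumr_const card_ord -[_ *+ N]mulr_natl => h.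
have kk : 0 < (k%:R : R) * k%:R by apply: mulr_gt0; rewrite ltr0n.
have h' : N%:R * (k%:R * k%:R) <= 2 * (k%:R * k%:R) * L.
  have e1 : N%:R * (k%:R * k%:R) = (N%:R * (k%:R * k%:R / L)) * L.
    by field; exact: lt0r_neq0.
  rewrite e1; apply: ler_wpM2r; first exact: ltW.
  by move: h; rewrite !mulrA.
nra.
Qed.
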